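(* For every set of formulas $\Gamma\cup\{\varphi\}\subseteq For$: $\Gamma \vdash_{\bf Dm} \varphi$ if and only if there exists a set of formulas $\Upsilon$ such that $\Gamma\cup\{\circ \delta \ : \ \delta \in \Upsilon\} \vdash_{\bf Km} \varphi$, where $\circ\delta:=\Box\delta\to\Diamond\delta$.
   Context: Formulas are built from a denumerable set of propositional variables by the unary connectives $\neg$, $\Box$ and the binary connective $\to$; $For$ is the set of all formulas. Abbreviations: $\Diamond\alpha:=\neg\Box\neg\alpha$, $\alpha\vee\beta:=\neg\alpha\to\beta$, $\alpha\wedge\beta:=\neg(\alpha\to\neg\beta)$. All Hilbert calculi below have as axioms all instances (over $For$) of the axiom schemas of a standard Hilbert calculus for classical propositional logic in the signature $\{\neg,\to\}$, plus the listed modal schemas, with modus ponens as the only rule; $\Gamma\vdash_{\bf L}\alpha$ means there is a derivation of $\alpha$ from $\Gamma$ in ${\bf L}$. ${\bf Km}$: (K') $\Diamond\alpha\to(\Box(\alpha\to\beta)\to(\Box\alpha\to\Box\beta))$; (K1') $\Diamond\neg\beta\to(\Box(\alpha\to\beta)\to(\Diamond\alpha\to\Diamond\beta))$; (K2') $\Diamond\alpha\to(\Diamond(\alpha\to\beta)\to(\Box\alpha\to\Diamond\beta))$; (M3') $(\Diamond\alpha\vee\Diamond\neg\alpha)\to(\Diamond\beta\to\Diamond(\alpha\to\beta))$; (M4') $\Diamond\neg\beta\to(\Diamond\neg\alpha\to\Diamond(\alpha\to\beta))$; (I1) $(\Box\alpha\wedge\Box\neg\alpha)\to(\Box(\alpha\to\beta)\wedge\Box\neg(\alpha\to\beta))$;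 (I2) $(\Box\beta\wedge\Box\neg\beta)\to(\Box(\alpha\to\beta)\wedge\Box\neg(\alpha\to\beta))$; (M1) $\neg\Diamond\alpha\to\Box(\alpha\to\beta)$; (M2) $\Box\beta\to\Box(\alpha\to\beta)$; (DN1) $\Box\alpha\to\Box\neg\neg\alpha$; (DN2) $\Box\neg\neg\alpha\to\Box\alpha$. ${\bf Dm}$: (K) $\Box(\alpha\to\beta)\to(\Box\alpha\to\Box\beta)$; (K1) $\Box(\alpha\to\beta)\to(\Diamond\alpha\to\Diamond\beta)$; (K2) $\Diamond(\alpha\to\beta)\to(\Box\alpha\to\Diamond\beta)$; (M1); (M2); (M3) $\Diamond\beta\to\Diamond(\alpha\to\beta)$; (M4) $\Diamond\neg\alpha\to\Diamond(\alpha\to\beta)$; (DN1); (DN2); (D) $\Box\alpha\to\Diamond\alpha$. *)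

(* Defs.v *)
Inductive form : Type :=
| Var : nat -> form
| Neg : form -> form
| Box : form -> form
| Imp : form -> form -> form.

Definition Dia (a : form) : form := Neg (Box (Neg a)).
Definition Or (a b : form) : form := Imp (Neg a) b.
Definition And (a b : form) : form := Neg (Imp a (Neg b)).

Definition circ (d : form) : form := Imp (Box d) (Dia d).

Definition fset := form -> Prop.

(* A standard Hilbert calculus for classical propositional logic in {neg, imp}
   (Mendelson's axioms), instances over all formulas. *)
Inductive cpl_axiom : form -> Prop :=
| CA1 : forall a b, cpl_axiom (Imp a (Imp b a))
| CA2 : forall a b c,
    cpl_axiom (Imp (Imp a (Imp b c)) (Imp (Imp a b) (Imp a c)))
| CA3 : forall a b,
    cpl_axiom (Imp (Imp (Neg b) (Neg a)) (Imp (Imp (Neg b) a) b)).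

Inductive km_axiom : form -> Prop :=
| Kp : forall a b, km_axiom (Imp (Dia a) (Imp (Box (Imp a b)) (Imp (Box a) (Box b))))
| K1p : forall a b, km_axiom (Imp (Dia (Neg b)) (Imp (Box (Imp a b)) (Imp (Dia a) (Dia b))))
| K2p : forall a b, km_axiom (Imp (Dia a) (Imp (Dia (Imp a b)) (Imp (Box a) (Dia b))))
| M3p : forall a b, km_axiom (Imp (Or (Dia a) (Dia (Neg a))) (Imp (Dia b) (Dia (Imp a b))))
| M4p : forall a b, km_axiom (Imp (Dia (Neg b)) (Imp (Dia (Neg a)) (Dia (Imp a b))))
| I1 : forall a b, km_axiom (Imp (And (Box a) (Box (Neg a)))
                                 (And (Box (Imp a b)) (Box (Neg (Imp a b)))))
| I2 : forall a b, km_axiom (Imp (And (Box b) (Box (Neg b)))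
                                 (And (Box (Imp a b)) (Box (Neg (Imp a b)))))
| KmM1 : forall a b, km_axiom (Imp (Neg (Dia a)) (Box (Imp a b)))
| KmM2 : forall a b, km_axiom (Imp (Box b) (Box (Imp a b)))
| KmDN1 : forall a, km_axiom (Imp (Box a) (Box (Neg (Neg a))))
| KmDN2 : forall a, km_axiom (Imp (Box (Neg (Neg a))) (Box a)).

Inductive dm_axiom : form -> Prop :=
| K : forall a b, dm_axiom (Imp (Box (Imp a b)) (Imp (Box a) (Box b)))
| K1 : forall a b, dm_axiom (Imp (Box (Imp a b)) (Imp (Dia a) (Dia b)))
| K2 : forall a b, dm_axiom (Imp (Dia (Imp a b)) (Imp (Box a) (Dia b)))
| DmM1 : forall a b, dm_axiom (Imp (Neg (Dia a)) (Box (Imp a b)))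
| DmM2 : forall a b, dm_axiom (Imp (Box b) (Box (Imp a b)))
| M3 : forall a b, dm_axiom (Imp (Dia b) (Dia (Imp a b)))
| M4 : forall a b, dm_axiom (Imp (Dia (Neg a)) (Dia (Imp a b)))
| DmDN1 : forall a, dm_axiom (Imp (Box a) (Box (Neg (Neg a))))
| DmDN2 : forall a, dm_axiom (Imp (Box (Neg (Neg a))) (Box a))
| D : forall a, dm_axiom (Imp (Box a) (Dia a)).

Inductive derives (Ax : form -> Prop) (G : fset) : form -> Prop :=
| d_hyp : forall a, G a -> derives Ax G a
| d_cpl : forall a, cpl_axiom a -> derives Ax G a
| d_ax : forall a, Ax a -> derives Ax G a
| d_mp : forall a b, derives Ax G a -> derives Ax G (Imp a b) -> derives Ax G b.

Definition derives_Km := derives km_axiom.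
Definition derives_Dm := derives dm_axiom.

(* Main.v *)
Require Import Defs.

Definition ext (G : fset) (a : form) : fset := fun f => G f \/ f = a.

Lemma mono Ax (G G' : fset) a : (forall f, G f -> G' f) -> derives Ax G a -> derives Ax G' a.
Proof.
  intros HG H; induction H.
  - apply d_hyp; auto.
  - apply d_cpl; auto.
  - apply d_ax; auto.
  - eapply d_mp; [exact IHderives1 | exact IHderives2].
Qed.

Lemma wk Ax G x a : derives Ax G a -> derives Ax (ext G x) a.
Proof. apply mono; unfold ext; auto. Qed.

Lemma mp Ax G a b : derives Ax G (Imp a b) -> derives Ax G a -> derives Ax G b.
Proof. intros; eapply d_mp; eauto. Qed.

Lemma idt Ax G a : derives Ax G (Imp a a).
Proof.
  apply (mp _ _ (Imp a (Imp a a))).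
  apply (mp _ _ (Imp a (Imp (Imp a a) a))).
  apply d_cpl, CA2. apply d_cpl, CA1. apply d_cpl, CA1.
Qed.

Lemma ded Ax G a b : derives Ax (ext G a) b -> derives Ax G (Imp a b).
Proof.
  intros H; induction H.
  - destruct H as [H|H].
    + apply (mp _ _ a0). apply d_cpl, CA1. apply d_hyp; auto.
    + subst; apply idt.
  - apply (mp _ _ a0). apply d_cpl, CA1. apply d_cpl; auto.
  - apply (mp _ _ a0). apply d_cpl, CA1. apply d_ax; auto.
  - apply (mp _ _ (Imp a a0)); [apply (mp _ _ (Imp a (Imp a0 b))); [apply d_cpl, CA2 | auto] | auto].
Qed.

Lemma efq Ax G a b : derives Ax G (Neg a) -> derives Ax G a -> derives Ax G b.
Proof.
  intros H1 H2.
  apply (mp _ _ (Imp (Neg b) a)). apply (mp _ _ (Imp (Neg b) (Neg a))). apply d_cpl, CA3.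
  apply (mp _ _ (Neg a)); [apply d_cpl, CA1| auto].
  apply (mp _ _ a); [apply d_cpl, CA1 | auto].
Qed.

Lemma dne Ax G a : derives Ax G (Neg (Neg a)) -> derives Ax G a.
Proof.
  intros H.
  apply (mp _ _ (Imp (Neg a) (Neg a))). apply (mp _ _ (Imp (Neg a) (Neg (Neg a)))).
  apply d_cpl, CA3. apply (mp _ _ (Neg (Neg a))); [apply d_cpl, CA1|auto]. apply idt.
Qed.

Lemma raa Ax G a b : derives Ax (ext G (Neg a)) b -> derives Ax (ext G (Neg a)) (Neg b) -> derives Ax G a.
Proof.
  intros H1 H2.
  apply (mp _ _ (Imp (Neg a) b)); [apply (mp _ _ (Imp (Neg a) (Neg b))); [apply d_cpl, CA3 | apply ded; auto] | apply ded; auto].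
Qed.

Ltac hyp := apply d_hyp; unfold ext; auto 10.

Lemma cases Ax G a c : derives Ax (ext G a) c -> derives Ax (ext G (Neg a)) c -> derives Ax G c.
Proof.
  intros H1 H2. apply (raa _ _ _ c).
  - apply (mp _ _ (Neg a)). apply wk, ded, H2. apply (raa _ _ _ c).
    + apply (mp _ _ a). apply wk, wk, ded, H1. apply dne. hyp.
    + apply wk. hyp.
  - hyp.
Qed.

Lemma usecirc Ax (G G' : fset) d : (forall d, G (circ d)) -> (forall f, G f -> G' f) ->
  derives Ax G' (Box d) -> derives Ax G' (Dia d).
Proof.
  intros HC HG H. apply (mp _ _ (Box d)); auto. apply d_hyp; apply HG; exact (HC d).
Qed.

Ltac incl := intros ? ?; unfold ext; auto 10.

Lemma dm_in_km G a : (forall d, G (circ d)) -> dm_axiom a -> derives km_axiom G a.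
Proof.
  intros HC H; destruct H.
  - apply ded, ded. apply (mp _ _ (Box a)); [|hyp]. apply (mp _ _ (Box (Imp a b))); [|hyp].
    apply (mp _ _ (Dia a)). apply d_ax, Kp. apply (usecirc _ G); [auto| incl | hyp].
  - apply ded, ded. apply (cases _ _ (Dia (Neg b))).
    + apply (mp _ _ (Dia a)); [|hyp]. apply (mp _ _ (Box (Imp a b))); [|hyp].
      apply (mp _ _ (Dia (Neg b))); [apply d_ax, K1p | hyp].
    + apply (usecirc _ G); [auto | incl |].
      apply (mp _ _ (Box (Neg (Neg b)))). apply d_ax, KmDN2. apply dne. hyp.
  - apply ded, ded. apply (mp _ _ (Box a)); [|hyp]. apply (mp _ _ (Dia (Imp a b))); [|hyp].
    apply (mp _ _ (Dia a)); [apply d_ax, K2p | apply (usecirc _ G); [auto | incl | hyp]].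
  - apply d_ax, KmM1.
  - apply d_ax, KmM2.
  - apply ded. apply (mp _ _ (Dia b)); [|hyp].
    apply (mp _ _ (Or (Dia a) (Dia (Neg a)))); [apply d_ax, M3p|].
    unfold Or; apply ded. apply (usecirc _ G); [auto | incl |]. apply dne. hyp.
  - apply ded. apply (cases _ _ (Dia (Neg b))).
    + apply (mp _ _ (Dia (Neg a))); [|hyp]. apply (mp _ _ (Dia (Neg b))); [apply d_ax, M4p|hyp].
    + apply (usecirc _ G); [auto | incl |].
      apply (mp _ _ (Box b)); [apply d_ax, KmM2|].
      apply (mp _ _ (Box (Neg (Neg b)))); [apply d_ax, KmDN2|]. apply dne. hyp.
  - apply d_ax, KmDN1.
  - apply d_ax, KmDN2.
  - apply d_hyp. exact (HC a).
Qed.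

Lemma km_in_dm G a : km_axiom a -> derives dm_axiom G a.
Proof.
  intros H; destruct H.
  - apply ded, wk, d_ax, K.
  - apply ded, wk, d_ax, K1.
  - apply ded, wk, d_ax, K2.
  - apply ded, wk, d_ax, M3.
  - apply ded, wk, d_ax, M4.
  - apply ded. apply (efq _ _ (Imp (Box a) (Neg (Box (Neg a))))). hyp.
    exact (d_ax _ _ _ (D a)).
  - apply ded. apply (efq _ _ (Imp (Box b) (Neg (Box (Neg b))))). hyp.
    exact (d_ax _ _ _ (D b)).
  - apply d_ax, DmM1.
  - apply d_ax, DmM2.
  - apply d_ax, DmDN1.
  - apply d_ax, DmDN2.
Qed.

Theorem mainTheorem3 : forall (Gamma : form -> Prop) (phi : form),
  derives_Dm Gamma phi <->
  exists Upsilon : form -> Prop,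
    derives_Km (fun f => Gamma f \/ exists d, Upsilon d /\ f = circ d) phi.
Proof.
  intros Gamma phi. unfold derives_Dm, derives_Km. split.
  - intro H. exists (fun _ => True). induction H.
    + apply d_hyp; left; auto.
    + apply d_cpl; auto.
    + apply dm_in_km; [intros d; right; exists d; auto | auto].
    + eapply d_mp; [exact IHderives1 | exact IHderives2].
  - intros [U H]. induction H.
    + destruct H as [H|[d [_ ->]]]. apply d_hyp; auto. apply d_ax, D.
    + apply d_cpl; auto.
    + apply km_in_dm; auto.
    + eapply d_mp; [exact IHderives1 | exact IHderives2].
Qed.
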